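(* Let $r,t\ge2$ be integers and let $m$ be any integer with $m\ge\log_2 t$. Then there exists a $(k_{t-1},b_r)$ resolvable configuration with $k=r^m$.
   Context: A $(k_{t-1},b_r)$ configuration is a pair $(X,\mathcal A)$ where $X$ is a set of $k$ points and $\mathcal A$ is a collection of $b$ subsets of $X$ (lines) such that (1) each line contains exactly $r$ points, (2) each point belongs to exactly $t-1$ lines, and (3) every pair of distinct points belongs to at most one line. It is resolvable if moreover (4) the lines can be partitioned into $t-1$ parallel classes, where a parallel class is a set of lines partitioning $X$. *)

(* Defs.v *)
From mathcomp Require Import all_boot.
Set Implicit Arguments. Unset Strict Implicit. Unset Printing Implicit Defensive.

(* A (k_{t-1}, b_r) configuration on the point set T (k = #|T|, b = #|L|):
   L is the set of lines. *)
Definition configuration (T : finType) (L : {set {set T}}) (r t : nat) : Prop :=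
  [/\ (forall l, l \in L -> #|l| = r),
      (forall x : T, #|[set l in L | x \in l]| = t.-1)
    & (forall x y : T, x != y -> #|[set l in L | (x \in l) && (y \in l)]| <= 1)].

Definition parallel_class (T : finType) (C : {set {set T}}) : Prop :=
  partition C [set: T].

Definition resolvable_configuration (T : finType) (L : {set {set T}}) (r t : nat)
  : Prop :=
  configuration L r t /\
  exists P : {set {set {set T}}},
    [/\ partition P L, #|P| = t.-1 & forall C, C \in P -> parallel_class C].

(* Main.v *)
Require Import Defs.
From mathcomp Require Import all_boot.
From mathcomp Require Import all_algebra.
Set Implicit Arguments. Unset Strict Implicit. Unset Printing Implicit Defensive.
Import GRing.Theory.

Definition shift n' m (x : {ffun 'I_m -> 'I_n'.+2}) (a : 'I_n'.+2) (S : {set 'I_m})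
  : {ffun 'I_m -> 'I_n'.+2} :=
  [ffun i => if i \in S then (x i + a)%R else x i].

Lemma shift0 n' m x S : @shift n' m x 0%R S = x.
Proof. apply/ffunP=> i; rewrite ffunE; case: ifP => // _; by rewrite addr0. Qed.

Lemma shiftD n' m x a b S : @shift n' m (shift x a S) b S = shift x (a + b)%R S.
Proof. apply/ffunP=> i; rewrite !ffunE; case: (i \in S) => //; by rewrite addrA. Qed.

Lemma shift_inj n' m x S : S != set0 -> injective (fun a => @shift n' m x a S).
Proof. case/set0Pn => i Si a b /= /ffunP /(_ i); rewrite !ffunE Si; exact: addrI. Qed.

Definition diffset n' m (u v : {ffun 'I_m -> 'I_n'.+2}) := [set i | u i != v i].

Lemma diff_shift n' m x a S : a != 0%R -> diffset x (@shift n' m x a S) = S.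
Proof.
move=> a0; apply/setP=> i; rewrite inE ffunE; case Si: (i \in S) => /=; last by rewrite eqxx.
apply/eqP => E; move/eqP: a0; apply; apply: (@addrI _ (x i)); by rewrite addr0 -E.
Qed.

Lemma cardV n' m : #|{ffun 'I_m -> 'I_n'.+2}| = n'.+2 ^ m.
Proof. by rewrite card_ffun !card_ord. Qed.

Definition hh n' m (p : 'I_(n'.+2 ^ m)) : {ffun 'I_m -> 'I_n'.+2} :=
  enum_val (cast_ord (esym (cardV n' m)) p).
Definition gg n' m (v : {ffun 'I_m -> 'I_n'.+2}) : 'I_(n'.+2 ^ m) :=
  cast_ord (cardV n' m) (enum_rank v).

Lemma ggK n' m : cancel (@gg n' m) (@hh n' m).
Proof. by move=> v; rewrite /hh /gg cast_ordK enum_rankK. Qed.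
Lemma hhK n' m : cancel (@hh n' m) (@gg n' m).
Proof. by move=> p; rewrite /hh /gg enum_valK cast_ordKV. Qed.

Definition line n' m (S : {set 'I_m}) (p : 'I_(n'.+2 ^ m)) : {set 'I_(n'.+2 ^ m)} :=
  [set gg (shift (hh p) a S) | a : 'I_n'.+2].

Lemma memL n' m S (p q : 'I_(n'.+2 ^ m)) :
  (q \in line S p) <-> exists a, hh q = shift (hh p) a S.
Proof.
split; first by case/imsetP => a _ ->; exists a; rewrite ggK.
by case=> a E; apply/imsetP; exists a => //; rewrite -E hhK.
Qed.

Lemma line_self n' m S (p : 'I_(n'.+2 ^ m)) : p \in line S p.
Proof. by apply/memL; exists 0%R; rewrite shift0. Qed.

Lemma line_eq n' m S (p q : 'I_(n'.+2 ^ m)) : q \in line S p -> line S q = line S p.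
Proof.
case/memL => a Ha; apply/eqP; rewrite eqEsubset; apply/andP; split;
  apply/subsetP => z /memL [c Hc]; apply/memL.
  by exists (a + c)%R; rewrite Hc Ha shiftD.
exists (- a + c)%R; by rewrite Hc Ha shiftD addrA addrN add0r.
Qed.

Lemma line_diff n' m S (p q : 'I_(n'.+2 ^ m)) :
  q \in line S p -> q != p -> S = diffset (hh p) (hh q).
Proof.
case/memL => a Ha qp; rewrite Ha diff_shift //; apply/eqP => a0.
move/eqP: qp; apply; apply: (can_inj (@hhK n' m)); by rewrite Ha a0 shift0.
Qed.

Lemma card_line n' m S (p : 'I_(n'.+2 ^ m)) : S != set0 -> #|line S p| = n'.+2.
Proof.
move=> S0; rewrite card_imset ?card_ord // => a b /(can_inj (@ggK n' m)).
exact: shift_inj.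
Qed.

Lemma line_inj n' m S S' (p q : 'I_(n'.+2 ^ m)) :
  S != set0 -> line S p = line S' q -> S = S'.
Proof.
move=> S0 E.
have pq : p \in line S' q by rewrite -E line_self.
have E' : line S' p = line S p by rewrite (line_eq pq) E.
set p1 := gg (shift (hh p) 1%R S).
have p1in : p1 \in line S p by apply/memL; exists 1%R; rewrite ggK.
have p1p : p1 != p.
  apply/eqP => e; move: (congr1 (@hh n' m) e); rewrite ggK.
  rewrite -{2}(shift0 (hh p) S) => /(shift_inj S0) /eqP.
  by rewrite oner_eq0.
rewrite (line_diff p1in p1p); apply: esym; apply: line_diff p1p; by rewrite E'.
Qed.

Definition cls n' m (S : {set 'I_m}) : {set {set 'I_(n'.+2 ^ m)}} :=
  [set line S p | p : 'I_(n'.+2 ^ m)].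

Lemma class_partition n' m (S : {set 'I_m}) : S != set0 ->
  partition (@cls n' m S) [set: 'I_(n'.+2 ^ m)].
Proof.
move=> S0; apply/and3P; split.
- apply/eqP/setP => x; rewrite inE; apply/bigcupP; exists (line S x);
    [by apply/imsetP; exists x | exact: line_self].
- apply/trivIsetP => A B /imsetP[p _ ->] /imsetP[q _ ->] neq.
  rewrite -setI_eq0; apply/eqP/setP => z; rewrite !inE.
  apply/negbTE/negP => /andP[zp zq].
  move/eqP: neq; apply. by rewrite -(line_eq zp) (line_eq zq).
- apply/imsetP => [[p _ e]]; have := line_self S p; by rewrite -e in_set0.
Qed.

Lemma main n' m (D : {set {set 'I_m}}) t :
  (forall S, S \in D -> S != set0) -> #|D| = t.-1 ->
  resolvable_configuration (\bigcup_(S in D) @cls n' m S) n'.+2 t.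
Proof.
move=> hD Dc.
set L := \bigcup_(S in D) @cls n' m S.
have inL : forall l, l \in L -> exists S p, S \in D /\ l = line S p.
  move=> l /bigcupP[S SD /imsetP[p _ ->]]; by exists S, p.
set p0 : 'I_(n'.+2 ^ m) := gg [ffun _ => (0%R : 'I_n'.+2)].
split; first split.
- by move=> l /inL [S [p [SD ->]]]; exact: card_line (hD _ SD).
- move=> x.
  have -> : [set l in L | x \in l] = [set line S x | S in D].
    apply/setP => l; rewrite inE; apply/andP/imsetP.
    + case => /inL [S [p [SD ->]]] xl; exists S => //; by rewrite (line_eq xl).
    + case => S SD ->; split; last exact: line_self.
      by apply/bigcupP; exists S => //; apply/imsetP; exists x.
  rewrite card_in_imset // => S S' SD _ e; exact: line_inj (hD _ SD) e.
- move=> x y xy.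
  apply: (@leq_trans #|[set line (diffset (hh x) (hh y)) x]|); last by rewrite cards1.
  apply/subset_leq_card/subsetP => l; rewrite !inE => /and3P[/inL[S [p [SD ->]]] xl yl].
  apply/eqP; rewrite -(line_eq xl) in yl *.
  by rewrite -(line_diff yl) // eq_sym.
exists [set cls n' S | S in D]; split.
- apply/and3P; split.
  + by rewrite cover_imset.
  + apply/trivIsetP => A B /imsetP[S SD ->] /imsetP[S' S'D ->] neq.
    rewrite -setI_eq0; apply/eqP/setP => l; rewrite !inE.
    apply/negbTE/negP => /andP[/imsetP[p _ e1] /imsetP[q _ e2]].
    move/eqP: neq; apply.
    by rewrite (line_inj (hD _ SD) (etrans (esym e1) e2)).
  + apply/imsetP => [[S SD e]].
    have : line S p0 \in cls n' S by apply/imsetP; exists p0.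
    by rewrite -e in_set0.
- rewrite card_in_imset // => S S' SD _ e.
  have : line S p0 \in cls n' S' by rewrite -e; apply/imsetP; exists p0.
  case/imsetP => q _ e2; exact: line_inj (hD _ SD) e2.
- by move=> C /imsetP[S SD ->]; apply: class_partition; apply: hD.
Qed.

Lemma existsD m t : t <= 2 ^ m ->
  exists D : {set {set 'I_m}}, (forall S, S \in D -> S != set0) /\ #|D| = t.-1.
Proof.
move=> tm.
set A := powerset [set: 'I_m] :\ set0.
have cA : #|A| = (2 ^ m).-1.
  have := cardsD1 set0 (powerset [set: 'I_m]).
  rewrite card_powerset cardsT card_ord powersetE sub0set /= add1n => ->.
  by [].
exists [set S in take t.-1 (enum A)]; split.
- move=> S; rewrite inE => /mem_take; rewrite mem_enum /A in_setD1.
  by case/andP.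
- rewrite cardsE; move/card_uniqP: (take_uniq t.-1 (enum_uniq (mem A))) => ->.
  rewrite size_takel // -cardE cA.
  by case: t tm => [|t'] //=; case: (2 ^ m).
Qed.

Theorem lemma10 (r t m : nat) :
  2 <= r -> 2 <= t -> t <= 2 ^ m ->
  exists L : {set {set 'I_(r ^ m)}}, resolvable_configuration L r t.
Proof.
case: r => [|[|n']] // _ _ tm.
have [D [hD Dc]] := existsD tm.
by exists (\bigcup_(S in D) @cls n' m S); apply: main.
Qed.
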